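(* Let $\mu\in\mathbb{C}$ with $\mu\notin\frac12\mathbb{Z}$ or $\mu\in\mathbb{Z}$, and let $\varphi$ be a $\frac12$-derivation of $\widetilde{L_{1,\mu}}^1$. Then there exist $\lambda_1\in\mathbb{C}$ and two families of complex numbers $\{\alpha_t\}_{t\in\mathbb{Z}}$, $\{\beta_t\}_{t\in\mathbb{Z}}$ such that for all $m\in\mathbb{Z}$: $\varphi(L_m)=\lambda_1L_m+\sum_{t\in\mathbb{Z}}\alpha_tM_{m+t}+\sum_{t\in\mathbb{Z}}\beta_tY_{m+t+\frac12}$, $\varphi(Y_{m+\frac12})=\lambda_1Y_{m+\frac12}+\sum_{t\in\mathbb{Z}}\beta_tM_{m+t+1}$, $\varphi(M_m)=\lambda_1M_m$, $\varphi(C_L)=\lambda_1C_L$.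
   Context: For $\mu\in\mathbb{C}$, $\widetilde{L_{1,\mu}}^1$ is the complex Lie algebra with basis $\{L_n,M_n,Y_{n+\frac12},C_L\mid n\in\mathbb{Z}\}$, $C_L$ central, and nonzero brackets $[L_m,L_n]=(n-m)L_{m+n}+\frac{m^3-m}{12}\delta_{m+n,0}C_L$, $[L_m,M_n]=(n-m+2\mu)M_{m+n}$, $[L_m,Y_{n+\frac12}]=(n+\frac12-m+\mu)Y_{m+n+\frac12}$, $[Y_{m+\frac12},Y_{n+\frac12}]=(n-m)M_{m+n+1}$. A $\frac12$-derivation is a linear map $\varphi$ with $\varphi([x,y])=\frac12([\varphi(x),y]+[x,\varphi(y)])$ for all $x,y$. The sums are understood as elements of the algebra (finitely many nonzero terms). *)

(* Defs.v *)
From HB Require Import structures.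
From mathcomp Require Import all_boot all_order all_algebra.
From mathcomp Require Import finmap.
From mathcomp.multinomials Require Import monalg.
Set Implicit Arguments. Unset Strict Implicit. Unset Printing Implicit Defensive.
Import Order.TTheory GRing.Theory Num.Theory.
Local Open Scope ring_scope.

(* Basis of the Lie algebra \widetilde{L_{1,mu}}^1 :
   BL n = L_n,  BM n = M_n,  BY n = Y_{n+1/2},  BC = C_L   (n : int). *)
Inductive basis := BL of int | BM of int | BY of int | BC.

Definition basis_enc (b : basis) : (int * nat) + unit :=
  match b with
  | BL n => inl (n, 0%N) | BM n => inl (n, 1%N) | BY n => inl (n, 2%N)
  | BC => inr tt end.
Definition basis_dec (x : (int * nat) + unit) : option basis :=
  match x with
  | inl (n, 0%N) => Some (BL n) | inl (n, 1%N) => Some (BM n)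
  | inl (n, 2%N) => Some (BY n) | inl _ => None | inr _ => Some BC end.
Lemma basis_encK : pcancel basis_enc basis_dec. Proof. by case. Qed.
HB.instance Definition _ := Countable.copy basis (pcan_type basis_encK).

Section LieAlg.
Variable C : numClosedFieldType.

Definition Lalg := {malg C[basis]}.

Definition eL (n : int) : Lalg := << BL n >>.
Definition eM (n : int) : Lalg := << BM n >>.
Definition eY (n : int) : Lalg := << BY n >>.
Definition eC : Lalg := << BC >>.

Definition brB (mu : C) (a b : basis) : Lalg :=
  match a, b with
  | BL m, BL n => (n - m)%:~R *: eL (m + n)
                  + ((m ^+ 3 - m)%:~R / 12%:R *+ (m + n == 0)) *: eC
  | BL m, BM n => ((n - m)%:~R + 2%:R * mu) *: eM (m + n)
  | BM n, BL m => - (((n - m)%:~R + 2%:R * mu) *: eM (m + n))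
  | BL m, BY n => ((n - m)%:~R + 2%:R^-1 + mu) *: eY (m + n)
  | BY n, BL m => - (((n - m)%:~R + 2%:R^-1 + mu) *: eY (m + n))
  | BY m, BY n => (n - m)%:~R *: eM (m + n + 1)
  | _, _ => 0
  end.

Definition lbr (mu : C) (x y : Lalg) : Lalg :=
  \sum_(a <- msupp x) \sum_(b <- msupp y) (x@_a * y@_b) *: brB mu a b.

Definition half_derivation (mu : C) (phi : Lalg -> Lalg) : Prop :=
  linear phi /\
  forall x y, phi (lbr mu x y) = 2%:R^-1 *: (lbr mu (phi x) y + lbr mu x (phi y)).

End LieAlg.

(* Main.v *)
Require Import Defs.
From HB Require Import structures.
From mathcomp Require Import all_boot all_order all_algebra.
From mathcomp Require Import finmap.
From mathcomp.multinomials Require Import monalg.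
From mathcomp Require Import ring zify.
Import Order.TTheory GRing.Theory Num.Theory.
Local Open Scope ring_scope.

Section Basics.
Variable C : numClosedFieldType.
Variable mu : C.
Local Notation r z := ((z : int)%:~R : C).

Lemma eqBLL (a b : int) : (BL a == BL b) = (a == b). Proof. by apply/eqP/eqP => [[]|->]. Qed.
Lemma eqBMM (a b : int) : (BM a == BM b) = (a == b). Proof. by apply/eqP/eqP => [[]|->]. Qed.
Lemma eqBYY (a b : int) : (BY a == BY b) = (a == b). Proof. by apply/eqP/eqP => [[]|->]. Qed.

Lemma msuppU1' (k : basis) : msupp (<< k >> : Lalg C) = [fset k]%fset.
Proof. by rewrite msuppU oner_eq0. Qed.
Lemma mcoeffU1' (k k' : basis) : (<< k >> : Lalg C)@_k' = (k == k')%:R.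
Proof. by rewrite mcoeffU. Qed.

Lemma sum_single_seq (T : eqType) (s : seq T) (F : T -> C) t0 :
  uniq s -> (forall t, t != t0 -> F t = 0) ->
  \sum_(t <- s) F t = if t0 \in s then F t0 else 0.
Proof.
move=> us HF; case: ifP => H.
  rewrite (bigD1_seq t0) //= big1 ?addr0 // => t; exact: HF.
rewrite big1_seq // => t /andP[_ ts]; apply: HF; apply/eqP => e.
by rewrite -e ts in H.
Qed.

Lemma sum_single (x : Lalg C) (f : basis -> C) a0 :
  (forall a, a != a0 -> f a = 0) ->
  \sum_(a <- msupp x) x@_a * f a = x@_a0 * f a0.
Proof.
move=> Hf; rewrite (@sum_single_seq _ _ (fun a => x@_a * f a) a0) ?fset_uniq //.
  case: ifP => // /negbT H; by rewrite mcoeff_outdom // mul0r.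
by move=> a /Hf ->; rewrite mulr0.
Qed.

Lemma lbrxU (x : Lalg C) b c :
  (lbr mu x << b >>)@_c = \sum_(a <- msupp x) x@_a * (brB mu a b)@_c.
Proof.
rewrite /lbr raddf_sum; apply: eq_bigr => a _; rewrite msuppU1'.

by rewrite big_seq_fset1 /= mcoeffZ mcoeffU1' eqxx mulr1.
Qed.

Lemma lbrUx (y : Lalg C) a c :
  (lbr mu << a >> y)@_c = \sum_(b <- msupp y) y@_b * (brB mu a b)@_c.
Proof.
rewrite /lbr msuppU1' big_seq_fset1 raddf_sum; apply: eq_bigr => b _.
by rewrite /= mcoeffZ mcoeffU1' eqxx mul1r.
Qed.

Lemma lbrUU a b : lbr mu << a >> << b >> = brB mu a b.
Proof.
by rewrite /lbr !msuppU1' !big_seq_fset1 !mcoeffU1' !eqxx mulr1 scale1r.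
Qed.

Ltac cfsimp := rewrite /eL /eM /eY /eC ?mcoeffD ?mcoeffN ?mcoeffZ ?mcoeffU1' ?mcoeff0 /=;
  rewrite ?eqBLL ?eqBMM ?eqBYY.

Ltac eqcases := repeat match goal with
  | |- context [(?a == ?b :> int)] => case: (a =P b) => ?
  end.

Lemma TL_L x n k i : i = k - n -> (lbr mu x (eL C n))@_(BL k) = x@_(BL i) * r(n - i).
Proof.
move=> ->; rewrite lbrxU (@sum_single _ _ (BL (k - n))).
  by cfsimp; eqcases; try lia; rewrite ?mulr1 ?mulr0 ?addr0 ?mulr0n.
case=> [j|j|j|] /=; rewrite ?eqBLL => h; cfsimp; eqcases; try lia; rewrite ?mulr1 ?mulr0 ?addr0 ?mulr0n ?oppr0 //.
Qed.

Ltac fin := rewrite ?mulr1 ?mulr0 ?addr0 ?add0r ?mulr0n ?mulr1n ?oppr0 ?mul0r ?mul1r; rewrite ?mulr1 ?mulr0 ?addr0 ?add0r ?mulr0n ?mulr1n ?oppr0 ?mul0r ?mul1r //.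

Ltac tab a0 := move=> ->; rewrite ?lbrxU ?lbrUx (@sum_single _ _ a0);
  [ by cfsimp; eqcases; try lia; fin
  | case=> [?|?|?|] /=; rewrite ?eqBLL ?eqBMM ?eqBYY => ?; cfsimp; eqcases; try lia; fin ].

Lemma TL_C x n i : i = - n -> (lbr mu x (eL C n))@_BC = x@_(BL i) * (r(i^+3 - i) / 12%:R).
Proof. tab (BL (-n)). Qed.
Lemma TL_M x n k i : i = k - n -> (lbr mu x (eL C n))@_(BM k) = x@_(BM i) * - (r(i - n) + 2%:R * mu).
Proof. tab (BM (k - n)). Qed.
Lemma TL_Y x n k i : i = k - n -> (lbr mu x (eL C n))@_(BY k) = x@_(BY i) * - (r(i - n) + 2%:R^-1 + mu).
Proof. tab (BY (k - n)). Qed.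
Lemma TLl_L m y k j : j = k - m -> (lbr mu (eL C m) y)@_(BL k) = y@_(BL j) * r(j - m).
Proof. tab (BL (k - m)). Qed.
Lemma TLl_C m y j : j = - m -> (lbr mu (eL C m) y)@_BC = y@_(BL j) * (r(m^+3 - m) / 12%:R).
Proof. tab (BL (- m)). Qed.
Lemma TLl_M m y k j : j = k - m -> (lbr mu (eL C m) y)@_(BM k) = y@_(BM j) * (r(j - m) + 2%:R * mu).
Proof. tab (BM (k - m)). Qed.
Lemma TLl_Y m y k j : j = k - m -> (lbr mu (eL C m) y)@_(BY k) = y@_(BY j) * (r(j - m) + 2%:R^-1 + mu).
Proof. tab (BY (k - m)). Qed.
Lemma TY_Y x n k i : i = k - n -> (lbr mu x (eY C n))@_(BY k) = x@_(BL i) * (r(n - i) + 2%:R^-1 + mu).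
Proof. tab (BL (k - n)). Qed.
Lemma TY_M x n k i : i = k - 1 - n -> (lbr mu x (eY C n))@_(BM k) = x@_(BY i) * r(n - i).
Proof. tab (BY (k - 1 - n)). Qed.
Lemma TYl_Y m y k j : j = k - m -> (lbr mu (eY C m) y)@_(BY k) = y@_(BL j) * - (r(m - j) + 2%:R^-1 + mu).
Proof. tab (BL (k - m)). Qed.
Lemma TYl_M m y k j : j = k - 1 - m -> (lbr mu (eY C m) y)@_(BM k) = y@_(BY j) * r(j - m).
Proof. tab (BY (k - 1 - m)). Qed.

Ltac tab0 := rewrite ?lbrxU ?lbrUx big1 // => -[?|?|?|] _; cfsimp; eqcases; try lia; fin.
Lemma TY_L x n k : (lbr mu x (eY C n))@_(BL k) = 0. Proof. tab0. Qed.
Lemma TY_C x n : (lbr mu x (eY C n))@_BC = 0. Proof. tab0. Qed.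
Lemma TYl_L m y k : (lbr mu (eY C m) y)@_(BL k) = 0. Proof. tab0. Qed.
Lemma TYl_C m y : (lbr mu (eY C m) y)@_BC = 0. Proof. tab0. Qed.
Lemma TCl y c : (lbr mu (eC C) y)@_c = 0. Proof. rewrite lbrUx big1 // => b _. by case: b => * /=; rewrite mcoeff0 mulr0. Qed.

Lemma solve1 (d X Y L R e : C) : d != 0 -> L = R -> d * (X - Y) = e * (L - R) -> X = Y.
Proof.
move=> hd ->; rewrite subrr mulr0 => /eqP; rewrite mulf_eq0 (negbTE hd) /= subr_eq0.
by move/eqP.
Qed.
Lemma solve2 (d X Y L1 R1 L2 R2 e1 e2 : C) : d != 0 -> L1 = R1 -> L2 = R2 ->
  d * (X - Y) = e1 * (L1 - R1) + e2 * (L2 - R2) -> X = Y.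
Proof.
move=> hd -> ->; rewrite !subrr !mulr0 addr0 => /eqP; rewrite mulf_eq0 (negbTE hd) /= subr_eq0.
by move/eqP.
Qed.
Lemma rnz (z : int) : z != 0 -> r z != 0.
Proof. by rewrite intr_eq0. Qed.
End Basics.

Ltac fld := repeat match goal with |- context [mcoeff ?k ?g] =>
  let X := fresh "X" in set X := mcoeff k g; clearbody X end; field.

Lemma nLM (a : int) (b : int) : (BL a == BM b) = false. Proof. by apply/eqP. Qed.
Lemma nLY (a : int) (b : int) : (BL a == BY b) = false. Proof. by apply/eqP. Qed.
Lemma nLC (a : int) : (BL a == BC) = false. Proof. by apply/eqP. Qed.
Lemma nML (a : int) (b : int) : (BM a == BL b) = false. Proof. by apply/eqP. Qed.
Lemma nMY (a : int) (b : int) : (BM a == BY b) = false. Proof. by apply/eqP. Qed.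
Lemma nMC (a : int) : (BM a == BC) = false. Proof. by apply/eqP. Qed.
Lemma nYL (a : int) (b : int) : (BY a == BL b) = false. Proof. by apply/eqP. Qed.
Lemma nYM (a : int) (b : int) : (BY a == BM b) = false. Proof. by apply/eqP. Qed.
Lemma nYC (a : int) : (BY a == BC) = false. Proof. by apply/eqP. Qed.
Lemma nCL (b : int) : (BC == BL b) = false. Proof. by apply/eqP. Qed.
Lemma nCM (b : int) : (BC == BM b) = false. Proof. by apply/eqP. Qed.
Lemma nCY (b : int) : (BC == BY b) = false. Proof. by apply/eqP. Qed.
Definition neqB := (nLM, nLY, nLC, nML, nMY, nMC, nYL, nYM, nYC, nCL, nCM, nCY).

Section Main.
Variable C : numClosedFieldType.
Variable mu : C.
Local Notation r z := ((z : int)%:~R : C).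
Variable phi : Lalg C -> Lalg C.
Hypothesis hY : forall k : int, r k + 2%:R^-1 + mu != 0.
Hypothesis phiL : linear phi.
Hypothesis phiH : forall x y, phi (lbr mu x y) = 2%:R^-1 *: (lbr mu (phi x) y + lbr mu x (phi y)).

Lemma phiD x y : phi (x + y) = phi x + phi y.
Proof. by have := phiL 1 x y; rewrite !scale1r. Qed.
Lemma phi0 : phi 0 = 0.
Proof. have h := phiD 0 0; rewrite addr0 in h; by apply: (addrI (phi 0)); rewrite -h addr0. Qed.
Lemma phiZ a x : phi (a *: x) = a *: phi x.
Proof. by have := phiL a x 0; rewrite !addr0 phi0 addr0. Qed.
Lemma phiN x : phi (- x) = - phi x.
Proof. by rewrite -scaleN1r phiZ scaleN1r. Qed.

Local Notation PL m := (phi (eL C m)).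
Local Notation PM m := (phi (eM C m)).
Local Notation PY m := (phi (eY C m)).
Local Notation PC := (phi (eC C)).
Local Notation A := (phi (eL C 0)).

Lemma EqLL m n c : r(n - m) * (PL (m + n))@_c + ((r(m ^+ 3 - m) / 12%:R) *+ (m + n == 0)) * PC@_c
  = 2%:R^-1 * ((lbr mu (PL m) (eL C n))@_c + (lbr mu (eL C m) (PL n))@_c).
Proof.
have := phiH (eL C m) (eL C n); rewrite lbrUU /= phiD !phiZ => /(congr1 (mcoeff c)).
by rewrite mcoeffZ mcoeffD !mcoeffZ => ->; rewrite /= ?mcoeffZ ?mcoeffD.
Qed.
Lemma EqLY m n c : (r(n - m) + 2%:R^-1 + mu) * (PY (m + n))@_c
  = 2%:R^-1 * ((lbr mu (PL m) (eY C n))@_c + (lbr mu (eL C m) (PY n))@_c).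
Proof.
have := phiH (eL C m) (eY C n); rewrite lbrUU /= !phiZ => /(congr1 (mcoeff c)).
by rewrite mcoeffZ ?mcoeffD !mcoeffZ => ->; rewrite /= ?mcoeffZ ?mcoeffD.
Qed.
Lemma EqYY m n c : r(n - m) * (PM (m + n + 1))@_c
  = 2%:R^-1 * ((lbr mu (PY m) (eY C n))@_c + (lbr mu (eY C m) (PY n))@_c).
Proof.
have := phiH (eY C m) (eY C n); rewrite lbrUU /= !phiZ => /(congr1 (mcoeff c)).
by rewrite mcoeffZ ?mcoeffD !mcoeffZ => ->; rewrite /= ?mcoeffZ ?mcoeffD.
Qed.
Lemma EqCL n c : 0 = 2%:R^-1 * ((lbr mu PC (eL C n))@_c + (lbr mu (eC C) (PL n))@_c).
Proof.
have := phiH (eC C) (eL C n); rewrite lbrUU /= phi0 => /(congr1 (mcoeff c)).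
by rewrite mcoeff0 => ->; rewrite /= ?mcoeffZ ?mcoeffD.
Qed.

Lemma PC_L j : PC@_(BL j) = 0.
Proof.
have := EqCL (j + 1) (BL (j + (j + 1))).
rewrite (@TL_L _ _ _ _ _ j) ?TCl; last by lia.
move=> H; apply: (@solve1 C 1 _ _ _ _ (-2%:R) _ H) => //; first exact: oner_neq0.

by fld. Qed.

Lemma PC_M j : PC@_(BM j) = 0.
Proof.
have := EqCL j (BM (j + j)); rewrite (@TL_M _ _ _ _ _ j) ?TCl; last by lia.
have := EqCL (j + 1) (BM (j + (j + 1))); rewrite (@TL_M _ _ _ _ _ j) ?TCl; last by lia.
move=> H2 H1; apply: (@solve2 C 1 _ _ _ _ _ _ 2%:R (-2%:R) _ H1 H2); first exact: oner_neq0.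
by fld.
Qed.

Lemma PC_Y j : PC@_(BY j) = 0.
Proof.
have := EqCL j (BY (j + j)); rewrite (@TL_Y _ _ _ _ _ j) ?TCl; last by lia.
have := EqCL (j + 1) (BY (j + (j + 1))); rewrite (@TL_Y _ _ _ _ _ j) ?TCl; last by lia.
move=> H2 H1; apply: (@solve2 C 1 _ _ _ _ _ _ 2%:R (-2%:R) _ H1 H2); first exact: oner_neq0.
by fld.
Qed.

Lemma E0L n s : n != s -> (PL n)@_(BL (n + s)) = A@_(BL s).
Proof.
move=> hns; have := EqLL 0 n (BL (n + s)).
rewrite (@TL_L _ _ _ _ _ s) ?(@TLl_L _ _ _ _ _ (n + s)) ?PC_L ?add0r; try lia.
move=> H; apply: (@solve1 C (r(n - s)) _ _ _ _ 2%:R _ H).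
  by apply: rnz; lia.
by fld.
Qed.

Lemma E0M n s : r(n - s) - 2%:R * mu != 0 -> (PL n)@_(BM (n + s)) = A@_(BM s).
Proof.
move=> hns; have := EqLL 0 n (BM (n + s)).
rewrite (@TL_M _ _ _ _ _ s) ?(@TLl_M _ _ _ _ _ (n + s)) ?PC_M ?add0r; try lia.
move=> H; apply: (@solve1 C (r(n - s) - 2%:R * mu) _ _ _ _ 2%:R _ H) => //.
by fld.
Qed.

Lemma E0Y n s : (PL n)@_(BY (n + s)) = A@_(BY s).
Proof.
have := EqLL 0 n (BY (n + s)).
rewrite (@TL_Y _ _ _ _ _ s) ?(@TLl_Y _ _ _ _ _ (n + s)) ?PC_Y ?add0r; try lia.
move=> H; apply: (@solve1 C (r(s - n) + 2%:R^-1 + mu) _ _ _ _ (-2%:R) _ H) => //.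
by fld.
Qed.

Lemma E0C n : r n * (PL n)@_BC = A@_(BL (- n)) * r(n - n ^+ 3) / 24%:R.
Proof.
have := EqLL 0 n BC.
rewrite (@TL_C _ _ _ _ (- n)) ?(@TLl_C _ _ _ _ (- 0)) ?add0r; try lia.
have -> : r(0 ^+ 3 - 0) = 0 by rewrite expr0n /= subr0.
rewrite mul0r mul0rn mul0r addr0.
move=> H; apply: (@solve1 C 1 _ _ _ _ 1 _ H); first exact: oner_neq0.
by fld.
Qed.

Lemma GLs n s : (PL n)@_(BL (n + s)) = A@_(BL s).
Proof.
have [<-|hns] := eqVneq n s; last exact: E0L.
have [->|hn] := eqVneq n 0; first by rewrite add0r.
have := EqLL n (3 * n) (BL (n + 3 * n + n)).
rewrite (@TL_L _ _ _ _ _ (n + n)) ?(@TLl_L _ _ _ _ _ (3 * n + n)) ?PC_L; try lia.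
rewrite (E0L (n + 3 * n) n) ?(E0L (3 * n) n); try lia.
move=> H; apply: (@solve1 C (r n) _ _ _ _ (-2%:R) _ H); first by apply: rnz.
by fld.
Qed.

Lemma GL n k : (PL n)@_(BL k) = A@_(BL (k - n)).
Proof. by rewrite -(GLs n (k - n)); congr (_@_ (BL _)); lia. Qed.

Lemma A_L s : s != 0 -> A@_(BL s) = 0.
Proof.
move=> hs.
have := EqLL s (- 2 * s) BC.
rewrite (@TL_C _ _ _ _ (s + s)) ?(@TLl_C _ _ _ _ (- 2 * s + s)) ?GLs; try lia.
have -> : (s + -2 * s == 0) = false by lia.
rewrite mulr0n mul0r addr0.
have := E0C (s + - 2 * s).
have -> : - (s + -2 * s) = s by lia.
move=> H2 H1; apply: (@solve2 C (r s ^+ 3) _ _ _ _ _ _ (-4%:R) 12%:R _ H1 H2).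
  by rewrite expf_neq0 // rnz.
by fld.
Qed.

Lemma A_BL j : A@_(BL j) = A@_(BL 0) * (j == 0)%:R.
Proof.
have [->|hj] := eqVneq j 0; first by rewrite mulr1.
by rewrite A_L // mulr0.
Qed.

Lemma A_C : A@_BC = 0.
Proof.
have := EqLL 1 (- 1) BC.
rewrite (@TL_C _ _ _ _ 1) ?(@TLl_C _ _ _ _ (- 1)) //.
have -> : (1 + -1 : int) = 0 by [].
rewrite eqxx mulr1n.
move=> H; apply: (@solve1 C (-2%:R) _ _ _ _ 1 _ H).
  by rewrite oppr_eq0 pnatr_eq0.
by fld.
Qed.

Lemma PL_C n : (PL n)@_BC = 0.
Proof.
have [->|hn] := eqVneq n 0; first exact: A_C.
have := E0C n; rewrite A_L ?oppr_eq0 // mul0r mul0r => /eqP.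
by rewrite mulf_eq0 (negbTE (@rnz C n hn)) => /eqP.
Qed.

Lemma PC_C : PC@_BC = A@_(BL 0).
Proof.
have := EqLL 2 (- 2) BC.
rewrite (@TL_C _ _ _ _ (2 + 0)) ?(@TLl_C _ _ _ _ (- 2 + 0)) ?GLs //.
have -> : (2 + -2 : int) = 0 by [].
rewrite eqxx mulr1n A_C mulr0 add0r.
move=> H; apply: (@solve1 C 1 _ _ _ _ 2%:R _ H); first exact: oner_neq0.
by fld.
Qed.

Lemma GMs n s : (PL n)@_(BM (n + s)) = A@_(BM s).
Proof.
have [h0|hns] := eqVneq (r(n - s) - 2%:R * mu) 0; last exact: E0M.
have Emu : 2%:R * mu = r(n - s) by apply/eqP; rewrite eq_sym -subr_eq0 h0.
have [->|hn] := eqVneq n 0; first by rewrite add0r.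
have := EqLL n (3 * n) (BM (n + 3 * n + s)).
rewrite (@TL_M _ _ _ _ _ (n + s)) ?(@TLl_M _ _ _ _ _ (3 * n + s)) ?PC_M; try lia.
have h1 : r(n + 3 * n - s) - 2%:R * mu != 0.
  by rewrite Emu -rmorphB /=; apply: rnz; lia.
have h2 : r(3 * n - s) - 2%:R * mu != 0.
  by rewrite Emu -rmorphB /=; apply: rnz; lia.
rewrite (E0M (n + 3 * n) s h1) (E0M (3 * n) s h2) Emu.
move=> H; apply: (@solve1 C (r n) _ _ _ _ (-2%:R) _ H); first by apply: rnz.
by fld.
Qed.

Lemma GM n k : (PL n)@_(BM k) = A@_(BM (k - n)).
Proof. by rewrite -(GMs n (k - n)); congr (_@_ (BM _)); lia. Qed.
Lemma GY n k : (PL n)@_(BY k) = A@_(BY (k - n)).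
Proof. by rewrite -(E0Y n (k - n)); congr (_@_ (BY _)); lia. Qed.

Lemma HY_Y n s : (PY n)@_(BY (n + s)) = A@_(BL s).
Proof.
have := EqLY 0 n (BY (n + s)).
rewrite (@TY_Y _ _ _ _ _ s) ?(@TLl_Y _ _ _ _ _ (n + s)) ?add0r; try lia.
move=> H; apply: (@solve1 C (r(n - s) + 2%:R^-1 + mu) _ _ _ _ 2%:R _ H) => //.
by fld.
Qed.

Lemma HY_C n : (PY n)@_BC = 0.
Proof.
have := EqLY 0 n BC.
rewrite TY_C (@TLl_C _ _ _ _ (- 0)) ?add0r //.
move=> H; apply: (@solve1 C (r n + 2%:R^-1 + mu) _ _ _ _ 1 _ H) => //.
by fld.
Qed.

Lemma HY_L0 n k : r(2 * n - k) + 1 + 2%:R * mu != 0 -> (PY n)@_(BL k) = 0.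
Proof.
move=> hd; have := EqLY 0 n (BL k).
rewrite TY_L (@TLl_L _ _ _ _ _ k) ?add0r; try lia.
move=> H; apply: (@solve1 C (r(2 * n - k) + 1 + 2%:R * mu) _ _ _ _ 2%:R _ H) => //.
by fld.
Qed.

Lemma HY_L n k : (PY n)@_(BL k) = 0.
Proof.
have [h0|hd] := eqVneq (r(2 * n - k) + 1 + 2%:R * mu) 0; last exact: HY_L0.
have := EqLY 1 (n - 1) (BL k).
rewrite TY_L (@TLl_L _ _ _ _ _ (k - 1)); last by lia.
have -> : 1 + (n - 1) = n by lia.
have h1 : r(2 * (n - 1) - (k - 1)) + 1 + 2%:R * mu != 0.
  have -> : r(2 * (n - 1) - (k - 1)) + 1 + 2%:R * mu = (r(2 * n - k) + 1 + 2%:R * mu) - 1.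
    by rewrite !(rmorphB, rmorphM, rmorphD) /=; ring.
  by rewrite h0 sub0r oppr_eq0 oner_eq0.
rewrite (HY_L0 (n - 1) (k - 1) h1) mul0r add0r.
move=> H; apply: (@solve1 C (r(n - 1 - 1) + 2%:R^-1 + mu) _ _ _ _ 1 _ H) => //.
by fld.
Qed.

Lemma HY_M n s : n != s -> (PY n)@_(BM (n + 1 + s)) = A@_(BY s).
Proof.
move=> hns; have := EqLY 0 n (BM (n + 1 + s)).
rewrite (@TY_M _ _ _ _ _ s) ?(@TLl_M _ _ _ _ _ (n + 1 + s)) ?add0r; try lia.
move=> H; apply: (@solve1 C (r(n - s)) _ _ _ _ 2%:R _ H).
  by apply: rnz; lia.
by fld.
Qed.

Lemma HY_Ms n s : (PY n)@_(BM (n + 1 + s)) = A@_(BY s).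
Proof.
have [<-|hns] := eqVneq n s; last exact: HY_M.
have := EqLY 1 (n - 1) (BM (n + 1 + n)).
rewrite (@TY_M _ _ _ _ _ (1 + n)) ?(@TLl_M _ _ _ _ _ (n - 1 + 1 + n)); try lia.
have -> : 1 + (n - 1) = n by lia.
have hn1 : n - 1 != n by lia.
rewrite (E0Y 1 n) (HY_M (n - 1) n hn1).
move=> H; apply: (@solve1 C (r(n - 1 - 1) + 2%:R^-1 + mu) _ _ _ _ 1 _ H) => //.
by fld.
Qed.

Lemma HYY n k : (PY n)@_(BY k) = A@_(BL (k - n)).
Proof. by rewrite -(HY_Y n (k - n)); congr (_@_ (BY _)); lia. Qed.
Lemma HYM n k : (PY n)@_(BM k) = A@_(BY (k - 1 - n)).
Proof. by rewrite -(HY_Ms n (k - 1 - n)); congr (_@_ (BM _)); lia. Qed.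

Lemma PM_L m n k : m != n -> (PM (m + n + 1))@_(BL k) = 0.
Proof.
move=> hmn; have := EqYY m n (BL k); rewrite TY_L TYl_L addr0 mulr0.
move=> H; apply: (@solve1 C (r(n - m)) _ _ _ _ 1 _ H); first by apply: rnz; lia.
by fld.
Qed.
Lemma PM_C m n : m != n -> (PM (m + n + 1))@_BC = 0.
Proof.
move=> hmn; have := EqYY m n BC; rewrite TY_C TYl_C addr0 mulr0.
move=> H; apply: (@solve1 C (r(n - m)) _ _ _ _ 1 _ H); first by apply: rnz; lia.
by fld.
Qed.
Lemma PM_Y m n k : m != n -> (PM (m + n + 1))@_(BY k) = 0.
Proof.
move=> hmn; have := EqYY m n (BY k).
rewrite (@TY_Y _ _ _ _ _ (k - n)) ?(@TYl_Y _ _ _ _ _ (k - m)) // !HY_L !mul0r addr0 mulr0.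
move=> H; apply: (@solve1 C (r(n - m)) _ _ _ _ 1 _ H); first by apply: rnz; lia.
by fld.
Qed.
Lemma PM_M m n k : m != n ->
  (PM (m + n + 1))@_(BM k) = A@_(BL 0) * (k - 1 - n - m == 0)%:R.
Proof.
move=> hmn; have := EqYY m n (BM k).
rewrite (@TY_M _ _ _ _ _ (k - 1 - n)) ?(@TYl_M _ _ _ _ _ (k - 1 - m)) // !HYY (A_BL (k - 1 - n - m)) (A_BL (k - 1 - m - n)).
have -> : (k - 1 - m - n == 0) = (k - 1 - n - m == 0) by lia.
move=> H; apply: (@solve1 C (r(n - m)) _ _ _ _ 1 _ H); first by apply: rnz; lia.
by fld.
Qed.

Lemma mn_ex p : exists m n : int, m != n /\ m + n + 1 = p.
Proof.
have [->|hp] := eqVneq p (-1); first by exists (-2), 0.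
by exists (-1), p; split; lia.
Qed.

Lemma sumM (S : {fset int}) (f : int -> C) m c :
  (\sum_(t <- S) f t *: eM C (m + t))@_c = \sum_(t <- S) f t * (BM (m + t) == c)%:R.
Proof. by rewrite raddf_sum; apply: eq_bigr => t _; rewrite /= mcoeffZ mcoeffU1'. Qed.
Lemma sumM1 (S : {fset int}) (f : int -> C) m c :
  (\sum_(t <- S) f t *: eM C (m + t + 1))@_c = \sum_(t <- S) f t * (BM (m + t + 1) == c)%:R.
Proof. by rewrite raddf_sum; apply: eq_bigr => t _; rewrite /= mcoeffZ mcoeffU1'. Qed.
Lemma sumY (S : {fset int}) (f : int -> C) m c :
  (\sum_(t <- S) f t *: eY C (m + t))@_c = \sum_(t <- S) f t * (BY (m + t) == c)%:R.
Proof. by rewrite raddf_sum; apply: eq_bigr => t _; rewrite /= mcoeffZ mcoeffU1'. Qed.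

Lemma sum_eval (S : {fset int}) (f : int -> C) (P : int -> bool) t0 :
  (forall t, P t = (t == t0)) -> (t0 \notin S -> f t0 = 0) ->
  \sum_(t <- S) f t * (P t)%:R = f t0.
Proof.
move=> hP hS; rewrite (@sum_single_seq C _ _ (fun t => f t * (P t)%:R) t0 (fset_uniq _)); last first.
  by move=> t ht; rewrite hP (negbTE ht) mulr0.
rewrite hP eqxx mulr1; case: ifP => // /negbT; by move/hS.
Qed.
Lemma sum_zero (S : {fset int}) (f : int -> C) (P : int -> bool) :
  (forall t, P t = false) -> \sum_(t <- S) f t * (P t)%:R = 0.
Proof. by move=> hP; rewrite big1 // => t _; rewrite hP mulr0. Qed.

Definition idx (b : basis) : int := match b with BL t | BM t | BY t => t | BC => 0 end.

Lemma coefL3 (S : {fset int}) (lam : C) (f g : int -> C) m c :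
  (lam *: eL C m + \sum_(t <- S) f t *: eM C (m + t) + \sum_(t <- S) g t *: eY C (m + t))@_c
  = lam * (BL m == c)%:R + \sum_(t <- S) f t * (BM (m + t) == c)%:R + \sum_(t <- S) g t * (BY (m + t) == c)%:R.
Proof. rewrite !mcoeffD mcoeffZ mcoeffU1'; congr (_ + _ + _); [exact: sumM | exact: sumY]. Qed.
Lemma coefY2 (S : {fset int}) (lam : C) (g : int -> C) m c :
  (lam *: eY C m + \sum_(t <- S) g t *: eM C (m + t + 1))@_c
  = lam * (BY m == c)%:R + \sum_(t <- S) g t * (BM (m + t + 1) == c)%:R.
Proof. rewrite !mcoeffD mcoeffZ mcoeffU1'; congr (_ + _); exact: sumM1. Qed.

Ltac cl := try done; try (by move=> t; rewrite ?neqB); try (by move=> t; rewrite ?eqBMM ?eqBYY; lia);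
  try (by move/St => []); try (by congr (_ * (_ %:R)); lia).

Lemma main_sec :
  exists (lam : C) (alpha beta : int -> C) (S : {fset int}),
    (forall t : int, t \notin S -> alpha t = 0 /\ beta t = 0) /\
    forall m : int,
      [/\ phi (eL C m) = lam *: eL C m
                         + \sum_(t <- S) alpha t *: eM C (m + t)
                         + \sum_(t <- S) beta t *: eY C (m + t),
          phi (eY C m) = lam *: eY C m + \sum_(t <- S) beta t *: eM C (m + t + 1),
          phi (eM C m) = lam *: eM C m
        & phi (eC C) = lam *: eC C].
Proof.
set S := [fset idx b | b in msupp A]%fset.
have St : forall t : int, t \notin S -> A@_(BM t) = 0 /\ A@_(BY t) = 0.
  move=> t tS; split; apply/eqP; rewrite mcoeff_eq0; apply: contra tS => h.
    by apply/imfsetP; exists (BM t).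
  by apply/imfsetP; exists (BY t).
exists (A@_(BL 0)), (fun t => A@_(BM t)), (fun t => A@_(BY t)), S; split => // m.
have z : forall (P : int -> bool) (f : int -> C), (forall t, P t = false) -> \sum_(t <- S) f t * (P t)%:R = 0.
  by move=> P f hP; apply: sum_zero.
split.
- apply/malgP => -[k|k|k|]; rewrite coefL3 ?eqBLL ?neqB.
  + rewrite (GL m k) (A_BL (k - m)) !z ?addr0; cl.
  + rewrite (GM m k) (@sum_eval S (fun t => A@_(BM t)) _ (k - m)) ?z ?mulr0 ?add0r ?addr0; cl.
  + rewrite (GY m k) (@sum_eval S (fun t => A@_(BY t)) _ (k - m)) ?z ?mulr0 ?add0r ?addr0; cl.
  + rewrite (PL_C m) !z ?mulr0 ?addr0; cl.
- apply/malgP => -[k|k|k|]; rewrite coefY2 ?eqBYY ?neqB.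
  + rewrite (HY_L m k) z ?mulr0 ?addr0; cl.
  + rewrite (HYM m k) (@sum_eval _ _ _ (k - 1 - m)) ?mulr0 ?add0r; cl.
  + rewrite (HYY m k) (A_BL (k - m)) z ?addr0; cl.
  + rewrite (HY_C m) z ?mulr0 ?addr0; cl.
- have [a [b [hab <-]]] := mn_ex m.
  apply/malgP => -[k|k|k|]; rewrite mcoeffZ mcoeffU1' ?eqBMM ?neqB.
  + by rewrite PM_L // mulr0.
  + rewrite PM_M //; congr (_ * (_ %:R)); lia.
  + by rewrite PM_Y // mulr0.
  + by rewrite PM_C // mulr0.
- apply/malgP => -[k|k|k|]; rewrite mcoeffZ mcoeffU1' ?neqB.
  + by rewrite PC_L mulr0.
  + by rewrite PC_M mulr0.
  + by rewrite PC_Y mulr0.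
  + by rewrite PC_C eqxx mulr1.
Qed.

End Main.

Lemma hY_of (C : numClosedFieldType) (mu : C) :
  ((forall k : int, mu != k%:~R / 2%:R) \/ (exists k : int, mu = k%:~R)) ->
  forall k : int, (k%:~R : C) + 2%:R^-1 + mu != 0.
Proof.
move=> hmu k; apply/negP => /eqP H.
have E : mu = (k%:~R + 2%:R^-1 + mu) - (k%:~R + 2%:R^-1) by ring.
rewrite H sub0r in E.
case: hmu => [hm|[j hj]].
  have := hm (- 2 * k - 1); rewrite E.
  have -> : - (k%:~R + 2%:R^-1) = ((- 2 * k - 1)%:~R / 2%:R : C).
    by rewrite !(rmorphB, rmorphM, rmorphN) /=; field.
  by rewrite eqxx.
have : ((2 * k + 2 * j + 1)%:~R : C) = 0.
  have -> : ((2 * k + 2 * j + 1)%:~R : C) = 2%:R * (k%:~R + 2%:R^-1 + j%:~R).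
    by rewrite !(rmorphD, rmorphM) /=; field.
  by rewrite -hj H mulr0.
move/eqP; rewrite intr_eq0; lia.
Qed.

Theorem mainTheorem7 (C : numClosedFieldType) (mu : C)
  (hmu : (forall k : int, mu != k%:~R / 2%:R) \/ (exists k : int, mu = k%:~R))
  (phi : Lalg C -> Lalg C) (hphi : half_derivation mu phi) :
  exists (lam : C) (alpha beta : int -> C) (S : {fset int}),
    (forall t : int, t \notin S -> alpha t = 0 /\ beta t = 0) /\
    forall m : int,
      [/\ phi (eL C m) = lam *: eL C m
                         + \sum_(t <- S) alpha t *: eM C (m + t)
                         + \sum_(t <- S) beta t *: eY C (m + t),
          phi (eY C m) = lam *: eY C m + \sum_(t <- S) beta t *: eM C (m + t + 1),
          phi (eM C m) = lam *: eM C m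
        & phi (eC C) = lam *: eC C].
Proof.
case: hphi => hl hh.
exact: (@main_sec C mu phi (@hY_of C mu hmu) hl hh).
Qed.
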